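(* Let $f(x,\theta)$ be a model, differentiable in its parameters $\theta\in\mathbb{R}^d$, and let $\mathcal{L}(\hat y, y)$ be a loss function. Let $\boldsymbol{\theta^{(t-1)}} = [\theta^L,\theta^U]\subseteq\mathbb{R}^d$ be an interval parameter domain. Let $\mathcal{B}^{(t)} = \{(\tilde x^{(i)},\tilde y^{(i)})\}_{i=1}^b$ be a nominal batch of size $b$, and let $n$ be an integer with $0\le n<b$. For each $i$, let $\delta_L^{(t,i)},\delta_U^{(t,i)}\in\mathbb{R}^d$ satisfy, element-wise, $$\delta_L^{(t,i)}\le \nabla_\theta\mathcal{L}\big(f(\tilde x^{(i)},\theta'),\tilde y^{(i)}\big)\le \delta_U^{(t,i)}\quad\text{for all }\theta'\in\boldsymbol{\theta^{(t-1)}}.$$ Then for every $\theta^{(t-1)}\in\boldsymbol{\theta^{(t-1)}}$ and every perturbed batch $\tilde{\mathcal{B}}^{(t)}$ obtained from $\mathcal{B}^{(t)}$ by removing up to $n$ data points, the descent direction $$\Delta\theta^{(t)} = \frac{1}{|\tilde{\mathcal{B}}^{(t)}|}\sum_{(\tilde x^{(i)},\tilde y^{(i)})\in\tilde{\mathcal{B}}^{(t)}}\nabla_\theta\mathcal{L}\big(f(\tilde x^{(i)},\theta^{(t-1)}),\tilde y^{(i)}\big)$$ satisfies, element-wise, $\Delta\theta_L^{(t)}\le\Delta\theta^{(t)}\le\Delta\theta_U^{(t)}$, where $$\Delta\theta_L^{(t)} = \frac{1}{b-n}\,\operatorname{SEMin}_{b-n}\{\delta_L^{(t,i)}\}_{i=1}^b,\qquad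 \Delta\theta_U^{(t)} = \frac{1}{b-n}\,\operatorname{SEMax}_{b-n}\{\delta_U^{(t,i)}\}_{i=1}^b.$$
   Context: An interval domain $[\theta^L,\theta^U]\subseteq\mathbb{R}^d$ is the set of $\theta$ with $\theta^L_j\le\theta_j\le\theta^U_j$ for all $j$. For a collection of vectors $\{v^{(i)}\}_{i=1}^b\subseteq\mathbb{R}^d$ and an integer $a\le b$, $\operatorname{SEMax}_a\{v^{(i)}\}$ is the vector whose $j$-th entry is the sum of the $a$ largest values among $v^{(1)}_j,\dots,v^{(b)}_j$, and $\operatorname{SEMin}_a\{v^{(i)}\}$ is the vector whose $j$-th entry is the sum of the $a$ smallest values among $v^{(1)}_j,\dots,v^{(b)}_j$ (computed independently at each index $j$). *)

(* Defs.v *)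
From HB Require Import structures.
From mathcomp Require Import all_boot all_order all_algebra.
From mathcomp Require Import all_classical all_reals all_analysis.
Set Implicit Arguments. Unset Strict Implicit. Unset Printing Implicit Defensive.
Import Order.TTheory GRing.Theory Num.Theory.
Import numFieldNormedType.Exports.
Local Open Scope ring_scope.

Definition grad (R : realType) (d : nat) (F : 'rV[R]_d -> R) (th : 'rV[R]_d)
  : 'rV[R]_d := \row_j ('D_(delta_mx 0 j) F th).

Definition in_interval (R : realType) (d : nat) (thL thU th : 'rV[R]_d) : Prop :=
  forall j, thL 0 j <= th 0 j <= thU 0 j.

Definition SEMin (R : realType) (d b : nat) (a : nat) (v : 'I_b -> 'rV[R]_d)
  : 'rV[R]_d :=
  \row_j \sum_(x <- take a (sort <=%R [seq v i 0 j | i <- enum 'I_b])) x.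
Definition SEMax (R : realType) (d b : nat) (a : nat) (v : 'I_b -> 'rV[R]_d)
  : 'rV[R]_d :=
  \row_j \sum_(x <- take a (sort >=%R [seq v i 0 j | i <- enum 'I_b])) x.

(* Main.v *)
Require Import Defs.
From HB Require Import structures.
From mathcomp Require Import all_boot all_order all_algebra.
From mathcomp Require Import all_classical all_reals all_analysis.
Import Order.TTheory GRing.Theory Num.Theory.
From mathcomp Require Import ring lra.
Import numFieldNormedType.Exports.
Local Open Scope ring_scope.

Lemma core (R : realType) b (a : 'I_b -> R) (S : {set 'I_b}) k :
  (0 < k)%N -> (k <= #|S|)%N ->
  k%:R^-1 * \sum_(x <- take k (sort <=%R [seq a i | i <- enum 'I_b])) x
  <= #|S|%:R^-1 * \sum_(i in S) a i.
Proof.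
move=> k0 kS.
set s := sort _ _.
have ss : sorted <=%R s by apply: sort_sorted; exact: le_total.
have sz : size s = b by rewrite size_sort size_map size_enum_ord.
have kb : (k <= b)%N by apply: leq_trans kS _; rewrite -[X in (_ <= X)%N](card_ord b); exact: max_card.
set c : R := nth 0 s k.-1.
pose w (x : R) := if x <= c then x - c else 0.
have hnth : forall i j, (i <= j < b)%N -> nth 0 s i <= nth 0 s j.
  move=> i j /andP[ij jb]; apply: (sorted_leq_nth le_trans lexx) => //;
  rewrite inE sz //; exact: leq_ltn_trans ij jb.
have key : \sum_(x <- take k s) x = k%:R * c + \sum_(x <- s) w x.
  have e1 : \sum_(x <- take k s) x = \sum_(0 <= i < k) nth 0 s i.
    rewrite (big_nth 0) size_take sz (ltn_neqAle k b) kb andbT.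
    have -> : (if k != b then k else b) = k by case: eqP => // ->.
    by apply: eq_big_nat => i /andP[_ ik]; rewrite nth_take.
  have e2 : \sum_(k <= i < b) w (nth 0 s i) = 0.
    rewrite big_nat_cond big1 //.
    move=> i /andP[/andP[ki ib] _]; rewrite /w.
    have := hnth k.-1 i; rewrite ib andbT (leq_trans (leq_pred k) ki) => /(_ isT).
    rewrite le_eqVlt => /orP[/eqP <-|]; first by rewrite lexx subrr.
    by rewrite ltNge => /negbTE ->.
  have e3 : \sum_(0 <= i < k) w (nth 0 s i) = \sum_(0 <= i < k) (nth 0 s i - c).
    apply: eq_big_nat => i /andP[_ ik]; rewrite /w.
    have := hnth i k.-1; rewrite -ltnS (prednK k0) ik (leq_trans _ kb) //.
    by move=> /(_ isT) ->.
  rewrite e1 [X in _ = _ + X](big_nth 0) sz (@big_cat_nat _ _ _ k 0 b _ _ (leq0n k) kb) /= e2 addr0 e3.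
  by rewrite sumrB sumr_const_nat subn0 mulr_natl addrCA subrr addr0.
have e4 : \sum_(x <- s) w x = \sum_i w (a i).
  by rewrite (perm_big _ (permEl (perm_sort _ _))) big_map big_enum.
have e5 : \sum_i w (a i) <= \sum_(i in S) w (a i).
  rewrite (bigID (fun i => i \in S)) /= gerDl.
  by apply: sumr_le0 => i _; rewrite /w; case: ifP => // /[!subr_le0].
have kp : (0 : R) < k%:R by rewrite ltr0n.
have mp : (0 : R) < #|S|%:R by rewrite ltr0n (leq_trans k0 kS).
have e6 : #|S|%:R * (k%:R * c + \sum_(i in S) w (a i)) <= k%:R * \sum_(i in S) a i.
  have -> : \sum_(i in S) a i = \sum_(i in S) (a i - c) + c *+ #|S|.
    by rewrite sumrB sumr_const subrK.
  have ec : #|S|%:R * (k%:R * c) = k%:R * (c *+ #|S|).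
    rewrite mulrCA; congr (_ * _); exact: mulr_natl.
  rewrite mulrDr [X in _ <= X]mulrDr ec addrC lerD2r !mulr_sumr; apply: ler_sum => i _; rewrite /w.
  case: ifP => [xc|/negbT]; last first.
    by rewrite mulr0 -ltNge => /ltW h; rewrite mulr_ge0 ?ler0n // subr_ge0.
  rewrite -subr_le0 in xc.
  by rewrite ler_wnM2r // ler_nat.
rewrite key e4.
apply: (@le_trans _ _ (k%:R^-1 * (k%:R * c + \sum_(i in S) w (a i)))).
  by rewrite ler_wpM2l ?invr_ge0 ?ler0n // lerD2l.
rewrite -(ler_pM2l (mulr_gt0 kp mp)).
have h1 : forall X : R, k%:R * #|S|%:R * (k%:R^-1 * X) = #|S|%:R * X.
  by move=> X; field; rewrite gt_eqF.
have h2 : forall X : R, k%:R * #|S|%:R * (#|S|%:R^-1 * X) = k%:R * X.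
  by move=> X; field; rewrite gt_eqF.
by rewrite h1 h2.
Qed.

Lemma core_max (R : realType) b (a : 'I_b -> R) (S : {set 'I_b}) k :
  (0 < k)%N -> (k <= #|S|)%N ->
  #|S|%:R^-1 * \sum_(i in S) a i <=
  k%:R^-1 * \sum_(x <- take k (sort >=%R [seq a i | i <- enum 'I_b])) x.
Proof.
move=> k0 kS.
have := @core _ _ (fun i => - a i) S k k0 kS.
have -> : [seq - a i | i <- enum 'I_b] = map -%R [seq a i | i <- enum 'I_b].
  by rewrite -[RHS]map_comp.
rewrite sort_map.
have -> : relpre -%R (<=%R : rel R) = >=%R.
  rewrite /relpre /Order.ge /=; congr SimplRel; apply: boolp.funext => x; apply: boolp.funext => y /=; by rewrite lerN2.
rewrite -map_take big_map sumrN sumrN !mulrN lerN2 //.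
Qed.

Theorem mainTheorem1 (R : realType) (d b n : nat)
  (X Y O : Type) (f : X -> 'rV[R]_d -> O) (L : O -> Y -> R)
  (xs : 'I_b -> X) (ys : 'I_b -> Y)
  (hdiff : forall (i : 'I_b) (th : 'rV[R]_d),
     differentiable (fun th' => L (f (xs i) th') (ys i)) th)
  (thL thU : 'rV[R]_d)
  (hnb : (n < b)%N)
  (deltaL deltaU : 'I_b -> 'rV[R]_d)
  (hdelta : forall (i : 'I_b) (th' : 'rV[R]_d), in_interval thL thU th' ->
     forall j, deltaL i 0 j <= grad (fun th => L (f (xs i) th) (ys i)) th' 0 j
               <= deltaU i 0 j) :
  forall (th : 'rV[R]_d), in_interval thL thU th ->
  forall (S : {set 'I_b}), (b - n <= #|S|)%N ->
  let Delta := (#|S|%:R)^-1 *: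
     \sum_(i in S) grad (fun th' => L (f (xs i) th') (ys i)) th in
  forall j,
    ((b - n)%:R)^-1 * SEMin (b - n) deltaL 0 j <= Delta 0 j
    <= ((b - n)%:R)^-1 * SEMax (b - n) deltaU 0 j.

Proof.
move=> th hth S hS Delta j.
have k0 : (0 < b - n)%N by rewrite subn_gt0.
have DE : Delta 0 j = #|S|%:R^-1 * \sum_(i in S) grad (fun th' => L (f (xs i) th') (ys i)) th 0 j.
  by rewrite /Delta mxE summxE.
rewrite DE /SEMin /SEMax !mxE; apply/andP; split.
  apply: le_trans (@core _ _ (fun i => deltaL i 0 j) S _ k0 hS) _.
  rewrite ler_wpM2l ?invr_ge0 ?ler0n //; apply: ler_sum => i _.
  by case/andP: (hdelta i th hth j).
apply: le_trans _ (@core_max _ _ (fun i => deltaU i 0 j) S _ k0 hS).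
rewrite ler_wpM2l ?invr_ge0 ?ler0n //; apply: ler_sum => i _.
by case/andP: (hdelta i th hth j).
Qed.
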